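(* Let $p\ge2$. The probabilistic frame potential $PFP(\mu)=\iint\langle x,y\rangle^2\,d\mu(x)\,d\mu(y)$ is strongly differentiable at every $\mu\in P_p(\mathbb{R}^d)$, with gradient plan $(\iota,4S_\mu)_\#\mu$.
   Context: $P_p(\mathbb{R}^d)$ is the set of Borel probability measures on $\mathbb{R}^d$ with finite $p$-th moment; $S_\mu=\int yy^\top d\mu(y)$ is the frame operator, viewed as the linear map $x\mapsto S_\mu x$; $\iota$ is the identity map and $(\iota,g)_\#\mu$ the pushforward of $\mu$ under $x\mapsto(x,g(x))$. Let $q=p/(p-1)$. For $\gamma\in P(\mathbb{R}^d\times\mathbb{R}^d)$ and $\nu\in P_p(\mathbb{R}^d)$, $\Gamma(\gamma,\nu)$ denotes the set of probability measures $\beta$ on $(\mathbb{R}^d)^3$ with $(\pi^1,\pi^2)_\#\beta=\gamma$ and $\pi^3_\#\beta=\nu$, and for $\mu=\pi^1_\#\gamma$, $C_{p,\beta}(\mu,\nu)=\big(\iiint\|x_1-x_3\|^p\,d\beta\big)^{1/p}$. A functional $F:P_p(\mathbb{R}^d)\to\mathbb{R}$ is strongly differentiable at $\mu$ with gradient plan $\gamma$ (where $\pi^1_\#\gamma=\mu$ and $\iint\|x_2\|^q d\gamma<\infty$) if for every $\nu\in P_p(\mathbb{R}^d)$ and every $\beta\in\Gamma(\gamma,\nu)$, $F(\nu)-F(\mu)=\iiint\langle x_2,x_3-x_1\rangle\,d\beta(x_1,x_2,x_3)+R_\beta$, where $|R_\beta|\le\omega(C_{p,\beta}(\mu,\nu))$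 for a function $\omega$ depending only on $\mu$ with $\omega(r)/r\to0$ as $r\to0$. *)

(* Defs.v *)
(* R^d is modelled as [d.-tuple R], whose measurable
   structure (generated by the coordinate projections) is the Borel
   sigma-algebra of R^d. *)
From HB Require Import structures.
From mathcomp Require Import all_boot all_order all_algebra.
From mathcomp Require Import all_classical all_reals all_analysis.
Set Implicit Arguments. Unset Strict Implicit. Unset Printing Implicit Defensive.
Import Order.TTheory GRing.Theory Num.Theory.
Import numFieldNormedType.Exports.
Local Open Scope classical_set_scope.
Local Open Scope ring_scope.

Section defs.
Context {R : realType} {d : nat}.
Notation V := (d.-tuple R).

Definition dotv (x y : V) : R := \sum_(i < d) tnth x i * tnth y i.
Definition normv (x : V) : R := Num.sqrt (dotv x x).
Definition subv (x y : V) : V := [tuple tnth x i - tnth y i | i < d].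
Definition scalev (a : R) (x : V) : V := [tuple a * tnth x i | i < d].

Definition finite_moment (p : R) (mu : probability V R) : Prop :=
  (\int[mu]_x ((normv x) `^ p)%:E < +oo)%E.

Definition frame_op (mu : probability V R) (x : V) : V :=
  [tuple Rintegral mu setT (fun y => tnth y i * dotv y x) | i < d].

Definition PFP (mu : probability V R) : R :=
  Rintegral mu setT (fun x => Rintegral mu setT (fun y => (dotv x y) ^+ 2)).

Definition Cpb (p : R) (beta : probability ((V * V) * V)%type R) : R :=
  (fine (\int[beta]_z ((normv (subv z.1.1 z.2)) `^ p)%:E)) `^ (p^-1).

Definition in_Gamma (gamma : probability (V * V)%type R) (nu : probability V R)
  (beta : probability ((V * V) * V)%type R) : Prop :=
  (forall A, measurable A -> beta (fst @^-1` A) = gamma A) /\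
  (forall B, measurable B -> beta (snd @^-1` B) = nu B).

(* F strongly differentiable at mu with gradient plan gamma
   (F is given on all probability measures but only evaluated on P_p) *)
Definition strongly_differentiable (p : R) (F : probability V R -> R)
  (mu : probability V R) (gamma : probability (V * V)%type R) : Prop :=
  let q := p / (p - 1) in
  (forall A, measurable A -> gamma (fst @^-1` A) = mu A) /\
  (\int[gamma]_z ((normv z.2) `^ q)%:E < +oo)%E /\
  exists omega : R -> R,
    (fun r => omega r / r) @ 0^'+ --> 0 /\
    forall (nu : probability V R), finite_moment p nu ->
    forall beta, in_Gamma gamma nu beta ->
      `| F nu - F mu
         - Rintegral beta setT (fun z => dotv z.1.2 (subv z.2 z.1.1)) |
        <= omega (Cpb p beta).

End defs.

(* Main.v *)
Require Import Defs.
From HB Require Import structures.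
From mathcomp Require Import all_boot all_order all_algebra.
From mathcomp Require Import all_classical all_reals all_analysis.
From mathcomp Require Import measurable_realfun.
From mathcomp Require Import ring lra.
Import Order.TTheory GRing.Theory Num.Theory.
Import numFieldNormedType.Exports.
Local Open Scope classical_set_scope.
Local Open Scope ring_scope.
Set Implicit Arguments. Unset Strict Implicit. Unset Printing Implicit Defensive.

Section transfer.
Local Open Scope ereal_scope.
Context (R : realType) dX dY (X : measurableType dX) (Y : measurableType dY)
  (P : probability X R) (Q : probability Y R) (phi : X -> Y)
  (mphi : measurable_fun setT phi)
  (hPQ : forall A, measurable A -> P (phi @^-1` A) = Q A).

Lemma transfer_ge0 (g : Y -> \bar R) : measurable_fun [set: Y] g -> (forall y, 0 <= g y) ->
  \int[P]_x g (phi x) = \int[Q]_y g y.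
Proof.
move=> mg g0.
rewrite -(@eq_measure_integral _ _ _ _ _ (pushforward P phi)); last first.
  by move=> A mA _; exact: hPQ.
by rewrite ge0_integral_pushforward.
Qed.

Lemma transfer (f : Y -> R) : measurable_fun setT f ->
  Q.-integrable setT (EFin \o f) ->
  P.-integrable setT (EFin \o (f \o phi)) /\
  (Rintegral P setT (f \o phi) = Rintegral Q setT f)%R.
Proof.
move=> mf /integrableP[_ fi].
have mfp : measurable_fun setT (f \o phi) by exact: measurableT_comp.
have ip : P.-integrable setT (EFin \o (f \o phi)).
  apply/integrableP; split; first exact/measurable_EFinP.
  rewrite (transfer_ge0 (g := fun y => `|(f y)%:E|)) //.
  by apply/measurableT_comp => //; exact/measurable_EFinP.
split => //; rewrite /Rintegral; congr fine.
rewrite -(@eq_measure_integral _ _ _ _ _ (pushforward P phi)); last first.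
  by move=> A mA _; exact: hPQ.
rewrite integral_pushforward //= ?preimage_setT //; exact/measurable_EFinP.
Qed.
End transfer.

Section gen.
Context (R : realType) dT (T : measurableType dT) (P : {measure set T -> \bar R}).

Definition intR (f : T -> R) := P.-integrable setT (EFin \o f).
Implicit Types f g : T -> R.

Lemma intR_sum I (s : seq I) (h : I -> T -> R) :
  (forall i, intR (h i)) -> intR (fun x => \sum_(i <- s) h i x).
Proof.
move=> hi; rewrite /intR.
have -> : EFin \o (fun x => \sum_(i <- s) h i x) =
   (fun x => (\sum_(i <- s) (h i x)%:E)%E).
  by apply: funext => x /=; rewrite sumEFin.
by apply: (integrable_sum measurableT) => i _; exact: hi.
Qed.

Lemma Rintegral_sum I (s : seq I) (h : I -> T -> R) :
  (forall i, intR (h i)) ->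
  Rintegral P setT (fun x => \sum_(i <- s) h i x) =
  \sum_(i <- s) Rintegral P setT (h i).
Proof.
move=> hi; elim: s => [|a s ih].
  rewrite big_nil; under eq_Rintegral do rewrite big_nil.
  by rewrite (Rintegral_cst _ measurableT) mul0r.
rewrite big_cons; under eq_Rintegral do rewrite big_cons.
rewrite RintegralD //; first by rewrite ih.
  exact: hi.
exact: (intR_sum s hi).
Qed.

Lemma intRD f g : intR f -> intR g -> intR (fun x => f x + g x).
Proof. by move=> hf hg; rewrite /intR; have := integrableD measurableT hf hg. Qed.

Lemma intRN f : intR f -> intR (fun x => - f x).
Proof. by move=> hf; rewrite /intR; have := integrableN hf. Qed.

Lemma intRB f g : intR f -> intR g -> intR (fun x => f x - g x).
Proof. by move=> hf hg; apply: intRD => //; exact: intRN. Qed.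

Lemma intRZ (k : R) f : intR f -> intR (fun x => k * f x).
Proof.
move=> hf; rewrite /intR.
have := integrableZl measurableT k hf.
by apply: (eq_integrable measurableT) => x _ /=; rewrite EFinM.
Qed.

Lemma intR_le f g : measurable_fun setT f -> (forall x, `|f x| <= g x) -> intR g -> intR f.
Proof.
move=> mf fg hg; apply: (le_integrable measurableT (g := EFin \o g)) => //.
  exact/measurable_EFinP.
move=> x _ /=; rewrite lee_fin (le_trans (fg x)) //.
exact: ler_norm.
Qed.

Definition sqint (f : T -> R) := measurable_fun setT f /\ intR (fun x => f x ^+ 2).

Lemma sqint_mul f g : sqint f -> sqint g -> intR (fun x => f x * g x).
Proof.
move=> [mf hf] [mg hg]; apply: (intR_le (g := fun x => f x ^+ 2 + g x ^+ 2)).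
- exact: measurable_funM.
- move=> x; rewrite normrM.
  have h1 : 0 <= (`|f x| - `|g x|) ^+ 2 by exact: sqr_ge0.
  rewrite -[f x ^+ 2]real_normK ?num_real // -[g x ^+ 2]real_normK ?num_real //.
  nra.
- exact: intRD.
Qed.

Lemma sqintD f g : sqint f -> sqint g -> sqint (fun x => f x + g x).
Proof.
move=> hf hg; split; first exact: measurable_funD hf.1 hg.1.
have := sqint_mul hf hg => hfg.
under eq_fun do rewrite sqrrD.
apply: intRD; [apply: intRD; [exact: hf.2|]|exact: hg.2].
under eq_fun do rewrite mulr2n.
by apply: intRD.
Qed.

Lemma sqintZ (k : R) f : sqint f -> sqint (fun x => k * f x).
Proof.
move=> [mf hf]; split; first exact: measurable_funM.
under eq_fun do rewrite exprMn.
exact: intRZ.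
Qed.

Lemma sqintB f g : sqint f -> sqint g -> sqint (fun x => f x - g x).
Proof.
move=> hf hg; have -> : (fun x => f x - g x) = (fun x => f x + (-1) * g x).
  by apply: funext => x; rewrite mulN1r.
exact: sqintD hf (sqintZ (-1) hg).
Qed.

Lemma sqint_le f g : measurable_fun setT f -> (forall x, f x ^+ 2 <= g x) -> intR g -> sqint f.
Proof.
move=> mf fg hg; split => //; apply: (intR_le (g := g)) => //.
  exact: measurable_funX.
by move=> x; rewrite ger0_norm ?sqr_ge0.
Qed.

Lemma abs_Rint_le f h : intR f -> intR h -> (forall x, `|f x| <= h x) ->
  `|Rintegral P setT f| <= Rintegral P setT h.
Proof.
move=> hf hh fh; apply: (le_trans (le_normr_Rintegral measurableT hf)).
apply: le_Rintegral => //; first exact: integrable_norm.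
Qed.

End gen.

From HB Require Import structures.
From mathcomp Require Import all_boot all_order all_algebra.
From mathcomp Require Import all_classical all_reals all_analysis.
From mathcomp Require Import measurable_realfun.
From mathcomp Require Import ring lra.
Import Order.TTheory GRing.Theory Num.Theory.
Import numFieldNormedType.Exports.
Local Open Scope classical_set_scope.
Local Open Scope ring_scope.
Set Implicit Arguments. Unset Strict Implicit. Unset Printing Implicit Defensive.

Section tup.
Context (R : realType) (d : nat).
Notation V := (d.-tuple R).
Implicit Types x y : V.

Lemma dotvC x y : dotv x y = dotv y x.
Proof. by apply: eq_bigr => i _; rewrite mulrC. Qed.

Lemma dotv_ge0 x : 0 <= dotv x x.
Proof. by apply: sumr_ge0 => i _; rewrite -expr2 sqr_ge0. Qed.

Lemma normv_ge0 x : 0 <= normv x.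
Proof. exact: sqrtr_ge0. Qed.

Lemma normvK x : normv x ^+ 2 = dotv x x.
Proof. by rewrite sqr_sqrtr // dotv_ge0. Qed.

Lemma coord_sq_le x i : tnth x i ^+ 2 <= dotv x x.
Proof.
rewrite /dotv (bigD1 i) //= -expr2 lerDl.
by apply: sumr_ge0 => j _; rewrite -expr2 sqr_ge0.
Qed.

Lemma coord_le x i : `|tnth x i| <= normv x.
Proof.
by rewrite -sqrtr_sqr ler_sqrt ?dotv_ge0 // coord_sq_le.
Qed.

Lemma tnth_subv x y i : tnth (subv x y) i = tnth x i - tnth y i.
Proof. by rewrite tnth_mktuple. Qed.

Lemma tnth_scalev a x i : tnth (scalev a x) i = a * tnth x i.
Proof. by rewrite tnth_mktuple. Qed.

Lemma dotv_subvC x y : dotv (subv x y) (subv x y) = dotv (subv y x) (subv y x).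
Proof.
by apply: eq_bigr => i _; rewrite !tnth_subv -!expr2 -sqrrN opprB.
Qed.

Lemma normv_subvC x y : normv (subv x y) = normv (subv y x).
Proof. by rewrite /normv dotv_subvC. Qed.

Lemma dotv_sub_le x y : dotv (subv x y) (subv x y) <= 2 * dotv x x + 2 * dotv y y.
Proof.
rewrite /dotv !mulr_sumr -big_split /=; apply: ler_sum => i _.
rewrite !tnth_subv.
have := sqr_ge0 (tnth x i + tnth y i); lra.
Qed.

Lemma measurable_coord dT (T : measurableType dT) (f : T -> V) i :
  measurable_fun setT f -> measurable_fun setT (fun t => tnth (f t) i).
Proof. by move=> mf; apply: (measurableT_comp (measurable_tnth i)). Qed.

Lemma measurable_dotv dT (T : measurableType dT) (f g : T -> V) :
  measurable_fun setT f -> measurable_fun setT g ->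
  measurable_fun setT (fun t => dotv (f t) (g t)).
Proof.
move=> mf mg; rewrite /dotv; apply: measurable_sum => i.
by apply: measurable_funM; exact: measurable_coord.
Qed.

Lemma measurable_normv dT (T : measurableType dT) (f : T -> V) :
  measurable_fun setT f -> measurable_fun setT (fun t => normv (f t)).
Proof.
move=> mf; rewrite /normv.
apply: (measurableT_comp (f := @Num.sqrt R)); last exact: measurable_dotv.
apply: continuous_measurable_fun; exact: sqrt_continuous.
Qed.

Lemma measurable_normvp dT (T : measurableType dT) (f : T -> V) r :
  measurable_fun setT f -> measurable_fun setT (fun t => normv (f t) `^ r).
Proof.
move=> mf; apply: (measurableT_comp (measurable_powR r)).
exact: measurable_normv.
Qed.

Lemma measurable_subv dT (T : measurableType dT) (f g : T -> V) :
  measurable_fun setT f -> measurable_fun setT g ->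
  measurable_fun setT (fun t => subv (f t) (g t)).
Proof.
move=> mf mg; apply/measurable_fun_tnthP => i /=.
rewrite /comp.
have -> : (fun t => tnth (subv (f t) (g t)) i) = (fun t => tnth (f t) i - tnth (g t) i).
  by apply: funext => t /=; rewrite tnth_subv.
by apply: measurable_funB; exact: measurable_coord.
Qed.

End tup.

From HB Require Import structures.
From mathcomp Require Import all_boot all_order all_algebra.
From mathcomp Require Import all_classical all_reals all_analysis.
From mathcomp Require Import measurable_realfun.
From mathcomp Require Import ring lra.
Import Order.TTheory GRing.Theory Num.Theory.
Import numFieldNormedType.Exports.
Local Open Scope classical_set_scope.
Local Open Scope ring_scope.
Set Implicit Arguments. Unset Strict Implicit. Unset Printing Implicit Defensive.

Section pw.
Context (R : realType).
Implicit Types n a b c l p q : R.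

Lemma powR2 n : 0 <= n -> n `^ 2 = n ^+ 2.
Proof. by move=> n0; rewrite -powR_mulrn. Qed.

Lemma sq_le_powp n p : 0 <= n -> 2 <= p -> n ^+ 2 <= 1 + n `^ p.
Proof.
move=> n0 hp; have [n1|n1] := leP n 1.
  have : n ^+ 2 <= 1 by rewrite expr_le1.
  have := powR_ge0 n p; lra.
rewrite -powR2 //; apply: (le_trans _ (_ : n `^ p <= 1 + n `^ p)); last lra.
by apply: ler_powR => //; lra.
Qed.

Lemma powq_le_sq n q : 0 <= n -> 0 <= q -> q <= 2 -> n `^ q <= 1 + n ^+ 2.
Proof.
move=> n0 q0 q2; have [n1|n1] := leP n 1.
  have : n `^ q <= 1 `^ q.
    by apply: ge0_ler_powR => //; rewrite nnegrE //.
  rewrite powR1 /=; have := sqr_ge0 n; lra.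
apply: (le_trans _ (_ : n ^+ 2 <= 1 + n ^+ 2)); last lra.
rewrite -powR2 //; apply: ler_powR => //; lra.
Qed.

Lemma sq_le_interp n l p : 0 <= n -> 0 < l -> 2 <= p ->
  n ^+ 2 <= l ^+ 2 + l `^ (2 - p) * n `^ p.
Proof.
move=> n0 l0 hp; have [nl|nl] := leP n l.
  have : n ^+ 2 <= l ^+ 2 by rewrite ler_sqr // nnegrE; lra.
  have := powR_ge0 n p; have := powR_ge0 l (2 - p).
  move=> h1 h2 h3; have := mulr_ge0 h1 h2; lra.
have nn0 : n != 0 by rewrite gt_eqF //; lra.
have ln0 : l != 0 by rewrite gt_eqF.
have -> : n `^ p = n `^ (p - 2) * n `^ 2.
  rewrite -powRD ?nn0 ?orbT ?implybT //; congr (_ `^ _); lra.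
rewrite powR2 //.
have h : 1 <= l `^ (2 - p) * n `^ (p - 2).
  have : l `^ (p - 2) <= n `^ (p - 2).
    by apply: ge0_ler_powR; rewrite ?nnegrE; lra.
  have e : l `^ (2 - p) * l `^ (p - 2) = 1.
    rewrite -powRD ?ln0 ?implybT //; by rewrite (_ : 2 - p + (p - 2) = 0) ?powRr0 //; lra.
  have := powR_gt0 (2 - p) l0; move=> h1 h2.
  by have := ler_wpM2l (ltW h1) h2; rewrite e.
have h2 := sqr_ge0 n; have h3 := sqr_ge0 l.
rewrite mulrA; have := ler_wpM2r h2 h; rewrite mul1r; lra.
Qed.

Lemma pow_sum_le a b c p : 0 <= a -> 0 <= b -> 0 <= c -> 0 <= p ->
  c ^+ 2 <= 2 * a ^+ 2 + 2 * b ^+ 2 -> c `^ p <= 2 `^ p * (a `^ p + b `^ p).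
Proof.
move=> a0 b0 c0 p0 hc.
have cm : c <= 2 * Num.max a b.
  have hm : 0 <= Num.max a b by rewrite le_max a0.
  rewrite -ler_sqr ?nnegrE //; last by rewrite mulr_ge0.
  apply: (le_trans hc); rewrite exprMn.
  have ha : a ^+ 2 <= Num.max a b ^+ 2 by rewrite ler_sqr ?nnegrE // le_max lexx.
  have hb : b ^+ 2 <= Num.max a b ^+ 2 by rewrite ler_sqr ?nnegrE // le_max lexx orbT.
  lra.
have hm : 0 <= Num.max a b by rewrite le_max a0.
apply: (le_trans (ge0_ler_powR p0 _ _ cm)); rewrite ?nnegrE ?mulr_ge0 //.
rewrite powRM // ler_pM2l ?powR_gt0 //.
have := powR_ge0 a p; have := powR_ge0 b p.
by case: (leP a b) => _ h1 h2; lra.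
Qed.

Lemma ab_le a b : `|a * b| <= (a ^+ 2 + b ^+ 2) / 2.
Proof.
rewrite normrM -[a ^+ 2]real_normK ?num_real // -[b ^+ 2]real_normK ?num_real //.
have := sqr_ge0 (`|a| - `|b|); lra.
Qed.

Lemma ab_le_l a b l : 0 < l -> `|a * b| <= (l * a ^+ 2 + b ^+ 2 / l) / 2.
Proof.
move=> l0.
rewrite normrM -[a ^+ 2]real_normK ?num_real // -[b ^+ 2]real_normK ?num_real //.
have h := sqr_ge0 (l * `|a| - `|b|).
have e : (l * `|a| ^+ 2 + `|b| ^+ 2 / l) / 2 - `|a| * `|b| = (l * `|a| - `|b|) ^+ 2 / (2 * l).
  by field; rewrite gt_eqF.
rewrite -subr_ge0 e; apply: divr_ge0 => //; lra.
Qed.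

Lemma le0_small x K : 0 <= K -> (forall l, 0 < l -> l <= 1 -> x <= l * K) -> x <= 0.
Proof.
move=> K0 h; rewrite leNgt; apply/negP => x0.
pose l := Num.min 1 (x / (2 * (K + 1))).
have K1 : 0 < 2 * (K + 1) by apply: mulr_gt0 => //; lra.
have y0 : 0 < x / (2 * (K + 1)) by apply: divr_gt0.
have l0 : 0 < l by rewrite lt_min ltr01 y0.
have l1 : l <= 1 by rewrite ge_min lexx.
have ly : l <= x / (2 * (K + 1)) by rewrite ge_min lexx orbT.
have := h l l0 l1.
have h2 : l * K <= x / (2 * (K + 1)) * K by exact: ler_wpM2r.
have h3 : x / (2 * (K + 1)) * K < x.
  rewrite mulrAC ltr_pdivrMr // ltr_pM2l //; lra.
lra.
Qed.

End pw.

From HB Require Import structures.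
From mathcomp Require Import all_boot all_order all_algebra.
From mathcomp Require Import all_classical all_reals all_analysis.
From mathcomp Require Import measurable_realfun.
From mathcomp Require Import ring lra.
Import Order.TTheory GRing.Theory Num.Theory.
Import numFieldNormedType.Exports.
Local Open Scope classical_set_scope.
Local Open Scope ring_scope.
Set Implicit Arguments. Unset Strict Implicit. Unset Printing Implicit Defensive.

Section mom.
Context (R : realType) (d : nat) (p : R) (hp : 2 <= p).
Notation V := (d.-tuple R).

Lemma int_np (nu : probability V R) : finite_moment p nu -> intR nu (fun x => normv x `^ p).
Proof.
move=> h; apply/integrableP; split.
  by apply/measurable_EFinP; apply: measurable_normvp.
apply: le_lt_trans h; rewrite le_eqVlt; apply/orP; left; apply/eqP.
by apply: eq_integral => x _ /=; rewrite ger0_norm // powR_ge0.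
Qed.

Lemma int_dotv (nu : probability V R) : finite_moment p nu -> intR nu (fun x => dotv x x).
Proof.
move=> h; apply: (intR_le (g := fun x => 1 + normv x `^ p)).
- by apply: measurable_dotv.
- move=> x; rewrite ger0_norm ?dotv_ge0 // -normvK.
  by apply: sq_le_powp => //; exact: normv_ge0.
- apply: intRD; last exact: int_np.
  exact: finite_measure_integrable_cst.
Qed.

Lemma sqint_coord (nu : probability V R) i : finite_moment p nu -> sqint nu (fun x => tnth x i).
Proof.
move=> h; apply: (sqint_le (g := fun x => dotv x x)).
- exact: measurable_tnth.
- by move=> x; exact: coord_sq_le.
- exact: int_dotv.
Qed.

Lemma int_cc (nu : probability V R) i j : finite_moment p nu ->
  intR nu (fun x => tnth x i * tnth x j).
Proof. by move=> h; apply: sqint_mul; exact: sqint_coord. Qed.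

Definition Mm (nu : probability V R) (i j : 'I_d) : R := Rintegral nu setT (fun y => tnth y i * tnth y j).

Lemma dotv_sqrE (x y : V) : dotv x y ^+ 2 =
  \sum_(i < d) \sum_(j < d) (tnth x i * tnth x j) * (tnth y i * tnth y j).
Proof.
rewrite expr2 /dotv big_distrlr /=; apply: eq_bigr => i _; apply: eq_bigr => j _.
by rewrite mulrACA.
Qed.

Lemma PFP_eq (nu : probability V R) : finite_moment p nu ->
  PFP nu = \sum_(i < d) \sum_(j < d) Mm nu i j ^+ 2.
Proof.
move=> h.
have inner x : Rintegral nu setT (fun y => dotv x y ^+ 2) =
    \sum_(i < d) \sum_(j < d) (tnth x i * tnth x j) * Mm nu i j.
  under eq_Rintegral do rewrite dotv_sqrE.
  rewrite Rintegral_sum; last by move=> i; apply: intR_sum => j; apply: intRZ; exact: int_cc.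
  apply: eq_bigr => i _; rewrite Rintegral_sum; last by move=> j; apply: intRZ; exact: int_cc.
  apply: eq_bigr => j _; rewrite RintegralZl //; exact: int_cc.
rewrite /PFP; under eq_Rintegral do rewrite inner.
rewrite Rintegral_sum; last first.
  by move=> i; apply: intR_sum => j; under eq_fun do rewrite mulrC; apply: intRZ; exact: int_cc.
apply: eq_bigr => i _; rewrite Rintegral_sum; last first.
  by move=> j; under eq_fun do rewrite mulrC; apply: intRZ; exact: int_cc.
apply: eq_bigr => j _; rewrite RintegralZr //; last exact: int_cc.
Qed.

End mom.

From HB Require Import structures.
From mathcomp Require Import all_boot all_order all_algebra.
From mathcomp Require Import all_classical all_reals all_analysis.
From mathcomp Require Import measurable_realfun.
From mathcomp Require Import ring lra.
Import Order.TTheory GRing.Theory Num.Theory.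
Import numFieldNormedType.Exports.
Local Open Scope classical_set_scope.
Local Open Scope ring_scope.
Set Implicit Arguments. Unset Strict Implicit. Unset Printing Implicit Defensive.

Section mainsec.
Context (R : realType) (d : nat) (p : R) (hp : 2 <= p).
Notation V := (d.-tuple R).
Context (mu : probability V R) (hmu : finite_moment p mu)
  (gamma : probability (V * V)%type R)
  (hgamma : forall A, measurable A ->
     gamma A = mu ((fun x => (x, scalev 4 (frame_op mu x))) @^-1` A)).

Let M := Mm mu.
Let g (x : V) := scalev 4 (frame_op mu x).
Let M2 := Rintegral mu setT (fun y : V => dotv y y).

Definition om (r : R) :=
  d%:R * (d%:R * (4 * M2 * r ^+ 2 + (r * (M2 + 2) + 2 * r ^+ 2) ^+ 2)).

Lemma bM i j : `|M i j| <= M2.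
Proof.
apply: abs_Rint_le; [exact: (int_cc hp i j hmu)| exact: (int_dotv hp hmu)|].
move=> y; apply: (le_trans (ab_le _ _)).
have := coord_sq_le y i; have := coord_sq_le y j; lra.
Qed.

Lemma tnth_frame x i : tnth (frame_op mu x) i = \sum_(j < d) M i j * tnth x j.
Proof.
rewrite tnth_mktuple.
under eq_Rintegral do rewrite /dotv mulr_sumr.
rewrite Rintegral_sum; last first.
  move=> j; under eq_fun do rewrite mulrA; rewrite /intR.
  have := intRZ (tnth x j) (int_cc hp i j hmu).
  by apply: (eq_integrable measurableT) => y _ /=; rewrite mulrC.
apply: eq_bigr => j _; rewrite /M /Mm -RintegralZr //; last exact: (int_cc hp _ _ hmu).
by apply: eq_Rintegral => y _; rewrite mulrA.
Qed.

Lemma tnth_g x i : tnth (g x) i = 4 * \sum_(j < d) M i j * tnth x j.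
Proof. by rewrite tnth_scalev tnth_frame. Qed.

Lemma measurable_g_comp dT (T : measurableType dT) (f : T -> V) :
  measurable_fun setT f -> measurable_fun setT (fun t => g (f t)).
Proof.
move=> mf; apply/measurable_fun_tnthP => i; rewrite /comp.
have -> : (fun t => tnth (g (f t)) i) = (fun t => 4 * \sum_(j < d) M i j * tnth (f t) j).
  by apply: funext => t; rewrite tnth_g.
apply: measurable_funM => //; apply: measurable_sum => j.
by apply: measurable_funM => //; exact: measurable_coord.
Qed.

Lemma gamma_fst A : measurable A -> gamma (fst @^-1` A) = mu A.
Proof.
move=> mA; rewrite hgamma //.
rewrite -[X in measurable X]setTI; exact: (measurable_fst measurableT _ mA).
Qed.

Definition Bad : set (V * V) := [set w | w.2 <> g w.1].

Lemma Bad_measurable : measurable Bad.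
Proof.
pose h (w : V * V) := \sum_(i < d) (tnth w.2 i - tnth (g w.1) i) ^+ 2.
have mh : measurable_fun setT h.
  apply: measurable_sum => i; apply: measurable_funX; apply: measurable_funB.
    by apply: measurable_coord.
  have := measurable_g_comp (f := (fst : V * V -> V)) measurable_fst.
  by move=> /measurable_fun_tnthP /(_ i).
have -> : Bad = h @^-1` (~` [set 0]).
  apply/seteqP; split => w /=.
    move=> hw h0; apply: hw; apply: eq_from_tnth => i.
    have := h0; rewrite /h => /eqP; rewrite psumr_eq0 => [/allP /(_ i)|j _]; last first.
      exact: sqr_ge0.
    by rewrite mem_index_enum => /(_ isT); rewrite sqrf_eq0 subr_eq0 => /eqP.
  move=> hw e; apply: hw; rewrite /h e.
  by apply: big1 => i _; rewrite subrr expr0n.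
have := mh measurableT (~` [set 0]) (measurableC (measurable_set1 _)).
by rewrite setTI.
Qed.

Lemma gamma_Bad : gamma Bad = 0%E.
Proof.
rewrite hgamma; last exact: Bad_measurable.
have -> : (fun x => (x, scalev 4 (frame_op mu x))) @^-1` Bad = set0.
  by apply/seteqP; split => x //= /(_ erefl).
exact: measure0.
Qed.


Section nubeta.
Context (nu : probability V R) (hnu : finite_moment p nu)
  (beta : probability ((V * V) * V)%type R) (hbeta : in_Gamma gamma nu beta).

Let phi1 (z : (V * V) * V) : V := z.1.1.

Lemma mphi1 : measurable_fun setT phi1.
Proof. exact: measurableT_comp measurable_fst measurable_fst. Qed.

Lemma hb1 A : measurable A -> beta (phi1 @^-1` A) = mu A.
Proof.
move=> mA; rewrite -gamma_fst //; apply: hbeta.1.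
rewrite -[X in measurable X]setTI; exact: (measurable_fst measurableT _ mA).
Qed.

Lemma tr1 (f : V -> R) : measurable_fun setT f -> intR mu f ->
  intR beta (fun z => f z.1.1) /\
  Rintegral beta setT (fun z => f z.1.1) = Rintegral mu setT f.
Proof. move=> mf hf; exact: (transfer mphi1 hb1 mf hf). Qed.

Lemma tr3 (f : V -> R) : measurable_fun setT f -> intR nu f ->
  intR beta (fun z => f z.2) /\
  Rintegral beta setT (fun z => f z.2) = Rintegral nu setT f.
Proof. move=> mf hf; exact: (transfer measurable_snd hbeta.2 mf hf). Qed.

Lemma sq1 i : sqint beta (fun z => tnth z.1.1 i).
Proof.
split; first exact: measurable_coord mphi1.
have [mc ic] := sqint_coord hp i hmu.
by have [] := tr1 (f := fun y => tnth y i ^+ 2) (measurable_funX _ mc) ic.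
Qed.

Lemma sq3 i : sqint beta (fun z => tnth z.2 i).
Proof.
split; first exact: measurable_coord measurable_snd.
have [mc ic] := sqint_coord hp i hnu.
by have [] := tr3 (f := fun y => tnth y i ^+ 2) (measurable_funX _ mc) ic.
Qed.

Definition uu i (z : (V * V) * V) := tnth z.2 i - tnth z.1.1 i.

Lemma squ i : sqint beta (uu i).
Proof. exact: sqintB (sq3 i) (sq1 i). Qed.


Definition Aa i j := Rintegral beta setT (fun z => tnth z.1.1 j * uu i z).
Definition Dd i j := Rintegral beta setT (fun z => uu i z * uu j z).

Lemma M_beta i j : M i j = Rintegral beta setT (fun z => tnth z.1.1 i * tnth z.1.1 j).
Proof.
have mf : measurable_fun setT (fun y : V => tnth y i * tnth y j).
  by apply: measurable_funM; exact: measurable_tnth.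
by have [_ ->] := tr1 mf (int_cc hp i j hmu).
Qed.

Lemma N_beta i j : Mm nu i j = Rintegral beta setT (fun z => tnth z.2 i * tnth z.2 j).
Proof.
have mf : measurable_fun setT (fun y : V => tnth y i * tnth y j).
  by apply: measurable_funM; exact: measurable_tnth.
by have [_ ->] := tr3 mf (int_cc hp i j hnu).
Qed.

Lemma N_decomp i j : Mm nu i j = M i j + Aa j i + Aa i j + Dd i j.
Proof.
rewrite N_beta M_beta /Aa /Dd.
have i11 := sqint_mul (sq1 i) (sq1 j).
have i1u := sqint_mul (sq1 i) (squ j).
have i1u' := sqint_mul (sq1 j) (squ i).
have iuu := sqint_mul (squ i) (squ j).
have i2 := intRD i11 i1u; have i3 := intRD i2 i1u'.
rewrite -!RintegralD //.
apply: eq_Rintegral => z _; rewrite /uu; ring.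

Qed.

Lemma grad_eq : Rintegral beta setT (fun z => dotv z.1.2 (subv z.2 z.1.1)) =
  \sum_(i < d) \sum_(j < d) 4 * M i j * Aa i j.
Proof.
have mu1 : measurable_fun setT (fun z : (V * V) * V => subv z.2 z.1.1).
  by apply: measurable_subv => //; exact: mphi1.
have -> : Rintegral beta setT (fun z => dotv z.1.2 (subv z.2 z.1.1)) =
          Rintegral beta setT (fun z => dotv (g z.1.1) (subv z.2 z.1.1)).
  rewrite /Rintegral; congr fine; apply: ae_eq_integral => //.
  - apply/measurable_EFinP; apply: measurable_dotv => //.
    exact: measurableT_comp measurable_snd measurable_fst.
  - apply/measurable_EFinP; apply: measurable_dotv => //.
    exact: measurable_g_comp mphi1.
  - exists (fst @^-1` Bad); split.
    + rewrite -[X in measurable X]setTI; exact: (measurable_fst measurableT _ Bad_measurable).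
    + exact: etrans (hbeta.1 _ Bad_measurable) gamma_Bad.
    + move=> z /= hz; rewrite /Bad /=; move=> e; apply: hz => _.
      by rewrite e.
have e z : dotv (g z.1.1) (subv z.2 z.1.1) =
    \sum_(i < d) \sum_(j < d) (4 * M i j) * (tnth z.1.1 j * uu i z).
  rewrite /dotv; apply: eq_bigr => i _; rewrite tnth_g tnth_subv mulr_sumr mulr_suml.
  by apply: eq_bigr => j _; rewrite /uu; ring.
under eq_Rintegral do rewrite e.
rewrite Rintegral_sum; last first.
  by move=> i; apply: intR_sum => j; apply: intRZ; exact: sqint_mul (sq1 j) (squ i).
apply: eq_bigr => i _; rewrite Rintegral_sum; last first.
  by move=> j; apply: intRZ; exact: sqint_mul (sq1 j) (squ i).
apply: eq_bigr => j _; rewrite RintegralZl //; exact: sqint_mul (sq1 j) (squ i).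
Qed.


Let E := Rintegral beta setT (fun z => dotv (subv z.2 z.1.1) (subv z.2 z.1.1)).
Let Ip := Rintegral beta setT (fun z => normv (subv z.2 z.1.1) `^ p).

Lemma dotv_uu z : dotv (subv z.2 z.1.1) (subv z.2 z.1.1) = \sum_(i < d) uu i z ^+ 2.
Proof. by apply: eq_bigr => i _; rewrite tnth_subv expr2. Qed.

Lemma intE : intR beta (fun z => dotv (subv z.2 z.1.1) (subv z.2 z.1.1)).
Proof.
under eq_fun do rewrite dotv_uu.
by apply: intR_sum => i; exact: (squ i).2.
Qed.

Lemma int11 : intR beta (fun z => dotv z.1.1 z.1.1) /\
  Rintegral beta setT (fun z => dotv z.1.1 z.1.1) = Rintegral mu setT (fun y => dotv y y).
Proof. by apply: tr1; [exact: measurable_dotv | exact: (int_dotv hp hmu)]. Qed.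

Lemma intIp : intR beta (fun z => normv (subv z.2 z.1.1) `^ p).
Proof.
have p0 : 0 <= p by apply: le_trans hp.
apply: (intR_le (g := fun z => 2 `^ p * (normv z.1.1 `^ p + normv z.2 `^ p))).
- apply: measurable_normvp; apply: measurable_subv => //; exact: mphi1.
- move=> z; rewrite ger0_norm ?powR_ge0 //.
  apply: pow_sum_le => //; try exact: normv_ge0.
  rewrite !normvK addrC; exact: dotv_sub_le.
- apply: intRZ; apply: intRD.
  + by have [] := tr1 (measurable_normvp p (measurable_id (D := setT))) (int_np hmu).
  + by have [] := tr3 (measurable_normvp p (measurable_id (D := setT))) (int_np hnu).
Qed.

Lemma bD i j : `|Dd i j| <= E.
Proof.
apply: abs_Rint_le; [exact: sqint_mul (squ i) (squ j)| exact: intE|].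
move=> z; apply: (le_trans (ab_le _ _)).
have h1 := coord_sq_le (subv z.2 z.1.1) i; rewrite tnth_subv in h1.
have h2 := coord_sq_le (subv z.2 z.1.1) j; rewrite tnth_subv in h2.
rewrite /uu; lra.
Qed.

Lemma bA i j l : 0 < l -> `|Aa i j| <= (l * M2 + E / l) / 2.
Proof.
move=> l0; have [i11 e11] := int11.
have -> : (l * M2 + E / l) / 2 = Rintegral beta setT
    (fun z => (l / 2) * dotv z.1.1 z.1.1 + (2 * l)^-1 * dotv (subv z.2 z.1.1) (subv z.2 z.1.1)).
  rewrite RintegralD //; [|exact: intRZ|exact: intRZ intE].
  rewrite !RintegralZl //; [|exact: intE].
  rewrite e11 /M2 /E; field; by rewrite gt_eqF.
apply: abs_Rint_le; [exact: sqint_mul (sq1 j) (squ i)| |].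
  by apply: intRD; [exact: intRZ|exact: intRZ intE].
move=> z; apply: (le_trans (ab_le_l _ _ l0)).
have h1 := coord_sq_le z.1.1 j.
have h2 := coord_sq_le (subv z.2 z.1.1) i; rewrite tnth_subv in h2.
rewrite /uu.
have e : (l * tnth z.1.1 j ^+ 2 + (tnth z.2 i - tnth z.1.1 i) ^+ 2 / l) / 2 =
  l / 2 * tnth z.1.1 j ^+ 2 + (2 * l)^-1 * (tnth z.2 i - tnth z.1.1 i) ^+ 2.
  by field; rewrite gt_eqF.
rewrite e; apply: lerD; apply: ler_wpM2l => //.
  by apply: divr_ge0 => //; exact: ltW.
by rewrite invr_ge0 mulr_ge0 // ltW.
Qed.

Lemma bE l : 0 < l -> E <= l ^+ 2 + l `^ (2 - p) * Ip.
Proof.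
move=> l0.
have -> : l ^+ 2 + l `^ (2 - p) * Ip = Rintegral beta setT
    (fun z => l ^+ 2 + l `^ (2 - p) * normv (subv z.2 z.1.1) `^ p).
  rewrite RintegralD //; [|exact: finite_measure_integrable_cst|exact: intRZ intIp].
  rewrite RintegralZl //; last exact: intIp.
  rewrite Rintegral_cst // [fine _](_ : _ = 1%R) ?mulr1 //.
  by rewrite -[1%R]/(fine 1%E); congr fine; exact: probability_setT.
apply: le_Rintegral => //; [exact: intE| |].
  by apply: intRD; [exact: finite_measure_integrable_cst|exact: intRZ intIp].
move=> z _; rewrite -normvK; apply: sq_le_interp => //; exact: normv_ge0.
Qed.

Lemma Ip_ge0 : 0 <= Ip.
Proof. by apply: Rintegral_ge0 => z _; exact: powR_ge0. Qed.

Lemma E_ge0 : 0 <= E.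
Proof. by apply: Rintegral_ge0 => z _; exact: dotv_ge0. Qed.

Lemma M2_ge0 : 0 <= M2.
Proof. by apply: Rintegral_ge0 => z _; exact: dotv_ge0. Qed.

Lemma Cpb_eq : Cpb p beta = Ip `^ p^-1.
Proof.
rewrite /Cpb /Ip /Rintegral.
have -> : (\int[beta]_z (normv (subv z.1.1 z.2) `^ p)%:E = \int[beta]_x (normv (subv x.2 x.1.1) `^ p)%:E)%E.
  by apply: eq_integral => z _; rewrite normv_subvC.
by [].
Qed.
Lemma Cpb_ge0 : 0 <= Cpb p beta.
Proof. by rewrite Cpb_eq powR_ge0. Qed.

Lemma CpbK : Cpb p beta `^ p = Ip.
Proof.
have p0 : p != 0 by rewrite gt_eqF //; apply: lt_le_trans hp.
by rewrite Cpb_eq -powRrM mulVf // powRr1 // Ip_ge0.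
Qed.

Lemma E_le : E <= 2 * Cpb p beta ^+ 2.
Proof.
have p0 : p != 0 by rewrite gt_eqF //; apply: lt_le_trans hp.
set C := Cpb p beta.
have [C0|C0] := eqVneq C 0.
  have I0 : Ip = 0 by rewrite -CpbK -/C C0 powR0.
  rewrite C0 expr0n /= mulr0; apply: (le0_small (K := 1)) => // l l0 l1.
  have := bE l0; rewrite I0 mulr0 addr0 => h; apply: (le_trans h).
  by rewrite expr2 ler_wpM2l // ltW.
have Cp : 0 < C by rewrite lt_neqAle eq_sym C0 Cpb_ge0.
apply: (le_trans (bE Cp)); rewrite -CpbK -/C.
have -> : C `^ (2 - p) * C `^ p = C ^+ 2.
  rewrite -powRD; last by rewrite C0 implybT.
  by rewrite (_ : 2 - p + p = 2) ?powR2 ?ltW //; lra.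
lra.
Qed.

Lemma A_le i j : `|Aa i j| <= Cpb p beta * (M2 + 2) / 2.
Proof.
set C := Cpb p beta.
have [C0|C0] := eqVneq C 0.
  have E0 : E = 0 by apply/eqP; rewrite eq_le E_ge0 andbT; have := E_le; rewrite -/C C0 expr0n /= mulr0.
  rewrite C0 mul0r mul0r.
  have h0 : `|Aa i j| - 0 <= 0.
    apply: (le0_small (K := M2)) => [|l l0 l1]; first exact: M2_ge0.
    rewrite subr0; apply: (le_trans (bA i j l0)); rewrite E0 mul0r addr0.
    have := M2_ge0; have := ltW l0 => h1 h2.
    have := mulr_ge0 h1 h2; lra.
  by rewrite subr0 in h0.
have Cp : 0 < C by rewrite lt_neqAle eq_sym C0 Cpb_ge0.
apply: (le_trans (bA i j Cp)).
have h : E / C <= 2 * C.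
  by rewrite ler_pdivrMr // -mulrA -expr2; exact: E_le.
have := h; lra.
Qed.

Lemma M_sym i j : M i j = M j i.
Proof. by apply: eq_Rintegral => y _; rewrite mulrC. Qed.

Lemma sum2B (F G : 'I_d -> 'I_d -> R) :
  \sum_(i < d) \sum_(j < d) (F i j - G i j) =
  \sum_(i < d) \sum_(j < d) F i j - \sum_(i < d) \sum_(j < d) G i j.
Proof. by rewrite -sumrB; apply: eq_bigr => i _; rewrite sumrB. Qed.

Lemma sum2D (F G : 'I_d -> 'I_d -> R) :
  \sum_(i < d) \sum_(j < d) (F i j + G i j) =
  \sum_(i < d) \sum_(j < d) F i j + \sum_(i < d) \sum_(j < d) G i j.
Proof. by rewrite -big_split; apply: eq_bigr => i _; rewrite big_split. Qed.

Lemma swapMA : \sum_(i < d) \sum_(j < d) M i j * Aa j i =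
  \sum_(i < d) \sum_(j < d) M i j * Aa i j.
Proof.
rewrite exchange_big /=; apply: eq_bigr => i _; apply: eq_bigr => j _.
by rewrite M_sym.
Qed.

Lemma key :
  \sum_(i < d) \sum_(j < d) Mm nu i j ^+ 2 - \sum_(i < d) \sum_(j < d) M i j ^+ 2
  - \sum_(i < d) \sum_(j < d) 4 * M i j * Aa i j =
  \sum_(i < d) \sum_(j < d) (2 * M i j * Dd i j + (Aa i j + Aa j i + Dd i j) ^+ 2).
Proof.
rewrite -!sum2B.
have e i j : Mm nu i j ^+ 2 - M i j ^+ 2 - 4 * M i j * Aa i j =
  (2 * M i j * Dd i j + (Aa i j + Aa j i + Dd i j) ^+ 2) +
  (2 * (M i j * Aa j i) - 2 * (M i j * Aa i j)).
  rewrite N_decomp; ring.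
under eq_bigr do under eq_bigr do rewrite e.
rewrite sum2D sum2B.
have -> : \sum_(i < d) \sum_(j < d) 2 * (M i j * Aa j i) =
  2 * \sum_(i < d) \sum_(j < d) M i j * Aa j i.
  by rewrite mulr_sumr; apply: eq_bigr => i _; rewrite mulr_sumr.
have -> : \sum_(i < d) \sum_(j < d) 2 * (M i j * Aa i j) =
  2 * \sum_(i < d) \sum_(j < d) M i j * Aa i j.
  by rewrite mulr_sumr; apply: eq_bigr => i _; rewrite mulr_sumr.
by rewrite swapMA subrr addr0.
Qed.

Lemma term_bound i j :
  `|2 * M i j * Dd i j + (Aa i j + Aa j i + Dd i j) ^+ 2| <=
  4 * M2 * Cpb p beta ^+ 2 + (Cpb p beta * (M2 + 2) + 2 * Cpb p beta ^+ 2) ^+ 2.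
Proof.
set C := Cpb p beta.
have hM := bM i j; have hD := bD i j; have hE := E_le; rewrite -/C in hE.
have hA1 := A_le i j; have hA2 := A_le j i; rewrite -/C in hA1 hA2.
have C0 : 0 <= C := Cpb_ge0.
have M20 := M2_ge0.
apply: (le_trans (ler_normD _ _)); apply: lerD.
  rewrite -mulrA normrM ger0_norm // normrM.
  have h1 : `|M i j| * `|Dd i j| <= M2 * (2 * C ^+ 2).
    apply: ler_pM => //; exact: (le_trans hD).
  lra.
have hS : `|Aa i j + Aa j i + Dd i j| <= C * (M2 + 2) + 2 * C ^+ 2.
  apply: (le_trans (ler_normD _ _)); apply: lerD; last exact: (le_trans hD).
  apply: (le_trans (ler_normD _ _)); lra.
rewrite normrX !expr2; apply: ler_pM => //.
Qed.

Lemma sum_const2 (B : R) : \sum_(i < d) \sum_(j < d) B = d%:R * (d%:R * B).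
Proof.
rewrite (eq_bigr (fun=> B *+ d)); last by move=> i _; rewrite sumr_const card_ord.
by rewrite sumr_const card_ord !mulr_natl.
Qed.

Lemma remainder :
  `|PFP nu - PFP mu - Rintegral beta setT (fun z => dotv z.1.2 (subv z.2 z.1.1))|
    <= om (Cpb p beta).
Proof.
rewrite (PFP_eq hp hnu) (PFP_eq hp hmu) grad_eq -/M key.

apply: (le_trans (ler_norm_sum _ _ _)).
apply: (le_trans (_ : _ <= \sum_(i < d) \sum_(j < d)
   (4 * M2 * Cpb p beta ^+ 2 + (Cpb p beta * (M2 + 2) + 2 * Cpb p beta ^+ 2) ^+ 2))).
  apply: ler_sum => i _; apply: (le_trans (ler_norm_sum _ _ _)).
  by apply: ler_sum => j _; exact: term_bound.
rewrite sum_const2; exact: lexx.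
Qed.

End nubeta.

Lemma om_lim : (fun r => om r / r) @ 0^'+ --> (0 : R).
Proof.
pose a := M2 + 2.
pose P : {poly R} := (d%:R * (d%:R * (4 * M2))) *: 'X +
   (d%:R * d%:R) *: ('X * (a%:P + 2%:P * 'X) ^+ 2).
have e : (fun r => om r / r) = horner P.
  apply: funext => r; rewrite /P /om !(hornerD, hornerZ, hornerM, hornerX, hornerC, horner_exp) /a.
  have [->|r0] := eqVneq r 0; first by rewrite invr0 mulr0; ring.
  by field.
have P0 : P.[0] = 0 by rewrite /P !(hornerD, hornerZ, hornerM, hornerX, hornerC, horner_exp); ring.
have hc := @continuous_horner R P 0.
rewrite e; have := cvg_at_right_filter hc; by rewrite P0.
Qed.

Lemma g_coord_le x i : `|tnth (g x) i| <= 4 * (d%:R * (M2 * normv x)).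
Proof.
rewrite tnth_g normrM ger0_norm // ler_pM2l //.
apply: (le_trans (ler_norm_sum _ _ _)).
apply: (le_trans (_ : _ <= \sum_(j < d) (M2 * normv x))).
  apply: ler_sum => j _; rewrite normrM; apply: ler_pM => //; [exact: bM | exact: coord_le].
by rewrite sumr_const card_ord mulr_natl.
Qed.

Lemma dotv_g_le x : dotv (g x) (g x) <= d%:R * (4 * (d%:R * M2)) ^+ 2 * dotv x x.
Proof.
apply: (le_trans (_ : _ <= \sum_(i < d) (4 * (d%:R * (M2 * normv x))) ^+ 2)).
  apply: ler_sum => i _; have h := g_coord_le x i.
  apply: (le_trans (ler_norm _)); rewrite normrM expr2.
  by apply: ler_pM.
rewrite sumr_const card_ord -mulr_natl -normvK.
by rewrite le_eqVlt; apply/orP; left; apply/eqP; ring.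
Qed.

Lemma qmom : (\int[gamma]_z ((normv z.2) `^ (p / (p - 1)))%:E < +oo)%E.
Proof.
set q := p / (p - 1).
have p1 : 0 < p - 1 by rewrite subr_gt0; apply: lt_le_trans hp; rewrite ltr1n.
have q0 : 0 <= q by apply: divr_ge0; [apply: le_trans hp | exact: ltW].
have q2 : q <= 2.
  rewrite /q ler_pdivrMr //; have := hp; lra.
have mphi : measurable_fun setT (fun x : V => (x, g x)).
  apply: measurable_fun_pair; first exact: (measurable_id (D := setT)).
  exact: (measurable_g_comp (measurable_id (D := setT))).
have hPQ A : measurable A -> mu ((fun x => (x, g x)) @^-1` A) = gamma A.
  by move=> mA; rewrite hgamma.
rewrite -(transfer_ge0 mphi hPQ (g := fun w => (normv w.2 `^ q)%:E)) /=; last 2 first.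
- apply/measurable_EFinP; exact: measurable_normvp measurable_snd.
- by move=> w; rewrite lee_fin powR_ge0.
set K := d%:R * (4 * (d%:R * M2)) ^+ 2.
have hi : intR mu (fun x => 1 + K * dotv x x).
  apply: intRD; first exact: finite_measure_integrable_cst.
  by apply: intRZ; exact: (int_dotv hp hmu).
apply: (le_lt_trans (_ : _ <= \int[mu]_x (1 + K * dotv x x)%:E)%E).
  apply: ge0_le_integral => //.
  - by move=> x _; rewrite lee_fin powR_ge0.
  - apply/measurable_EFinP; exact: measurable_normvp (measurable_g_comp (measurable_id (D := setT))).
  - by move/integrableP: hi => [].
  - move=> x _; rewrite lee_fin.
    apply: (le_trans (powq_le_sq _ q0 q2)); first exact: normv_ge0.
    by rewrite lerD2l normvK; exact: dotv_g_le.
exact: integrable_lty hi.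
Qed.

Lemma main_sd : strongly_differentiable p (@PFP R d) mu gamma.
Proof.
split; first exact: gamma_fst.
split; first exact: qmom.
exists om; split; first exact: om_lim.
move=> nu hnu beta hbeta; exact: remainder.
Qed.

End mainsec.


Unset Implicit Arguments.
Theorem mainTheorem6 (R : realType) (d : nat) (p : R) (hp : 2 <= p)
  (mu : probability (d.-tuple R) R) (hmu : finite_moment p mu)
  (gamma : probability (d.-tuple R * d.-tuple R)%type R)
  (hgamma : forall A, measurable A ->
     gamma A = mu ((fun x => (x, scalev 4 (frame_op mu x))) @^-1` A)) :
  strongly_differentiable p (@PFP R d) mu gamma.
Proof. exact: (main_sd hp hmu hgamma). Qed.
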